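(* Let $G$ be a Nash equilibrium graph of the sum network creation game with $n$ players and $\alpha>4n$, and let $H\subseteq G$ be a non-trivial $2$-edge-connected component. Then every minimal cycle in $H$ is directed.
   Context: Sum network creation game: players $V=\{1,\dots,n\}$, parameter $\alpha>0$; a strategy of $u$ is $s_u\subseteq V\setminus\{u\}$; the graph $G_s$ has vertex set $V$ and an edge $uv$ whenever $v\in s_u$ or $u\in s_v$; the cost of $u$ is $c_u(s)=\alpha|s_u|+\sum_{v\neq u}d_{G_s}(u,v)$. A Nash equilibrium is a strategy vector from which no player can strictly decrease his cost by changing only his own strategy; a Nash equilibrium graph is $G=G_s$ for such $s$, regarded also as a directed graph with an arc $(u,v)$ whenever $u$ bought the link to $v$, i.e. $v\in s_u$. A $2$-edge-connected component is a maximal bridgeless subgraph; non-trivial means at least $3$ vertices. A cycle $C$ is minimal if $d_G(u,v)=d_C(u,v)$ for all $u,v\in C$, where $d_C$ is the distance along $C$. A cycle $u_0-u_1-\dots-u_{k-1}-u_0$ is directed if either $(u_i,u_{i+1})$ is an arc for every $i$ mod $k$, or $(u_{i+1},u_i)$ is an arc for every $i$ mod $k$. *)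

(* Defs.v *)
From HB Require Import structures.
From mathcomp Require Import all_boot all_order all_algebra.
Set Implicit Arguments. Unset Strict Implicit. Unset Printing Implicit Defensive.
Import Order.TTheory GRing.Theory Num.Theory.

(** Players are 'I_n.  A strategy profile assigns to each player u the set
    s u of players to whom u buys a link. *)
Definition profile (n : nat) := 'I_n -> {set 'I_n}.

Definition valid_profile n (s : profile n) := forall u, u \notin s u.

Definition adj n (s : profile n) : rel 'I_n :=
  fun u v => (v \in s u) || (u \in s v).

Fixpoint ball n (s : profile n) (k : nat) (u : 'I_n) : {set 'I_n} :=
  match k with
  | 0 => [set u]
  | k'.+1 => ball s k' u :|: [set y | [exists x in ball s k' u, adj s x y]]
  end.

(** v is reachable from u (n steps always suffice). *)
Definition reach n (s : profile n) (u v : 'I_n) := v \in ball s n u.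

(** d_G(u,v): least k with v in ball k u (meaningful when reachable). *)
Definition dist n (s : profile n) (u v : 'I_n) : nat :=
  find (fun k => v \in ball s k u) (iota 0 n.+1).

(** Cost of u; None stands for +infinity (some player unreachable). *)
Definition cost (R : realFieldType) n (alpha : R) (s : profile n) (u : 'I_n)
  : option R :=
  if [forall v, reach s u v] then
    Some (alpha * (#|s u|)%:R + (\sum_(v | v != u) dist s u v)%:R)%R
  else None.

Definition cost_le (R : realFieldType) (a b : option R) : bool :=
  match a, b with
  | Some x, Some y => (x <= y)%R
  | _, None => true
  | None, Some _ => false
  end.

Definition deviate n (s : profile n) (u : 'I_n) (S : {set 'I_n}) : profile n :=
  fun w => if w == u then S else s w.

Definition nash (R : realFieldType) n (alpha : R) (s : profile n) : Prop :=
  valid_profile s /\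
  forall (u : 'I_n) (S : {set 'I_n}), u \notin S ->
    cost_le (cost alpha s u) (cost alpha (deviate s u S) u).

(** Generic (undirected) graph notions on vertex set V and edge set E
    (a symmetric set of ordered pairs). *)
Definition erel n (V : {set 'I_n}) (E : {set 'I_n * 'I_n}) : rel 'I_n :=
  fun a b => [&& a \in V, b \in V & (a, b) \in E].

Definition G_edges n (s : profile n) : {set 'I_n * 'I_n} :=
  [set p | adj s p.1 p.2].

Definition subgraph n (s : profile n) (V : {set 'I_n}) (E : {set 'I_n * 'I_n}) :=
  E \subset G_edges s /\
  (forall a b, (a, b) \in E -> (b, a) \in E /\ a \in V /\ b \in V).

Definition graph_connected n (V : {set 'I_n}) (E : {set 'I_n * 'I_n}) :=
  forall x y, x \in V -> y \in V -> connect (erel V E) x y.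

Definition bridgeless n (V : {set 'I_n}) (E : {set 'I_n * 'I_n}) :=
  forall a b, (a, b) \in E -> connect (erel V (E :\ (a, b) :\ (b, a))) a b.

Definition two_edge_connected n (s : profile n) V E :=
  subgraph s V E /\ graph_connected V E /\ bridgeless V E.

Definition two_ec_component n (s : profile n) V E :=
  two_edge_connected s V E /\
  forall V' E', two_edge_connected s V' E' -> V \subset V' -> E \subset E' ->
    V = V' /\ E = E'.

(** A cycle u_0 - ... - u_{k-1} - u_0 of (V,E), given as the sequence c;
    u_i = cv c i for i : 'I_k (k = size c), and ordS i = i+1 mod k. *)
Definition cv n (c : seq 'I_n) (i : 'I_(size c)) : 'I_n := tnth (in_tuple c) i.
Arguments cv {n} c i.

Definition cycle_in n (c : seq 'I_n) (V : {set 'I_n}) (E : {set 'I_n * 'I_n}) :=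
  [/\ 3 <= size c, uniq c, {subset c <= V} &
      forall i : 'I_(size c), (cv c i, cv c (ordS i)) \in E].

Definition cyc_dist (k i j : nat) : nat :=
  let d := if i <= j then j - i else i - j in minn d (k - d).

Definition minimal_cycle n (s : profile n) (c : seq 'I_n) :=
  forall i j : 'I_(size c), dist s (cv c i) (cv c j) = cyc_dist (size c) i j.

Definition directed_cycle n (s : profile n) (c : seq 'I_n) :=
  (forall i : 'I_(size c), cv c (ordS i) \in s (cv c i)) \/
  (forall i : 'I_(size c), cv c i \in s (cv c (ordS i))).

(* Main.v *)
Require Import Defs.
From HB Require Import structures.
From mathcomp Require Import all_boot all_order all_algebra.
From mathcomp Require Import zify ring lra.
Set Implicit Arguments. Unset Strict Implicit. Unset Printing Implicit Defensive.
Import Order.TTheory GRing.Theory Num.Theory.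

Section Ball.
Variables (n : nat) (s : profile n).

Lemma ballS k z : ball s k.+1 z = ball s k z :|: [set y | [exists x in ball s k z, adj s x y]].
Proof. by []. Qed.

Lemma ball0 z w : (w \in ball s 0 z) = (w == z).
Proof. by rewrite /= inE. Qed.

Lemma ball_refl z : z \in ball s 0 z.
Proof. by rewrite ball0. Qed.

Lemma ball_sub1 k z w : w \in ball s k z -> w \in ball s k.+1 z.
Proof. by move=> H; rewrite ballS inE H. Qed.

Lemma ball_mono k m z w : k <= m -> w \in ball s k z -> w \in ball s m z.
Proof.
move=> /subnK <-; elim: (m - k) => [|d IH] Hw //.
by rewrite addSn; apply: ball_sub1; apply: IH.
Qed.

Lemma ball_step k z w w' : w \in ball s k z -> adj s w w' -> w' \in ball s k.+1 z.
Proof.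
move=> Hw Ha; rewrite ballS inE; apply/orP; right; rewrite inE.
by apply/existsP; exists w; rewrite Hw Ha.
Qed.

Lemma ballSP k z w : w \in ball s k.+1 z ->
  w \in ball s k z \/ exists2 v, v \in ball s k z & adj s v w.
Proof.
rewrite ballS inE => /orP [H|]; first by left.
by rewrite inE => /existsP [v /andP [H1 H2]]; right; exists v.
Qed.

Lemma ball_trans m l z v w : v \in ball s m z -> w \in ball s l v -> w \in ball s (m + l) z.
Proof.
move=> Hv; elim: l w => [|l IH] w; first by rewrite ball0 addn0 => /eqP ->.
case/ballSP => [H|[v' H1 H2]].
  by rewrite addnS; apply: ball_sub1; apply: IH.
by rewrite addnS; apply: ball_step H2; apply: IH.
Qed.

Lemma adjC p q : adj s p q = adj s q p.
Proof. by rewrite /adj orbC. Qed.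

Lemma ball_adj z w : adj s z w -> w \in ball s 1 z.
Proof. by move=> H; apply: ball_step (ball_refl z) H. Qed.

Lemma ball_sym m z w : w \in ball s m z -> z \in ball s m w.
Proof.
elim: m w => [|m IH] w; first by rewrite !ball0 eq_sym.
case/ballSP => [H|[v H1 H2]]; first by apply: ball_sub1; apply: IH.
have := ball_trans (ball_adj (etrans (adjC w v) H2)) (IH _ H1).
by rewrite add1n.
Qed.

Lemma ball_fix k z : ball s k.+1 z = ball s k z ->
  forall m, k <= m -> ball s m z = ball s k z.
Proof.
move=> Hk; elim=> [|m IH] Hm; first by move: Hm; rewrite leqn0 => /eqP ->.
move: Hm; rewrite leq_eqVlt => /orP [/eqP <- //|Hm].
by rewrite ballS IH // -ballS Hk.
Qed.

Lemma ball_grow z k : (exists2 k', k' < k & ball s k'.+1 z = ball s k' z) \/ k < #|ball s k z|.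
Proof.
elim: k => [|k [[k' H1 H2]|IH]]; first by right; rewrite /= cards1.
  by left; exists k' => //; apply: ltnW.
case E: (ball s k.+1 z == ball s k z); first by left; exists k => //; apply/eqP.
right; apply: leq_ltn_trans IH _; apply: proper_card.
rewrite properEneq eq_sym E /=; apply/subsetP => w; exact: ball_sub1.
Qed.

Lemma ball_stab m z w : w \in ball s m z -> w \in ball s n z.
Proof.
case: (leqP m n) => Hmn; first by apply: ball_mono.
case: (ball_grow z n) => [[k' H1 H2]|H].
  by rewrite (ball_fix H2 (ltnW H1)) -(ball_fix H2 (ltnW (leq_trans H1 (ltnW Hmn)))).
by move: (max_card (mem (ball s n z))); rewrite card_ord => /(leq_trans H); rewrite ltnn.
Qed.

Lemma dist_le m z w : w \in ball s m z -> dist s z w <= m.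
Proof.
move=> Hw.
have Hm : w \in ball s (minn m n) z.
  case: (leqP m n) => H //.
  by apply: ball_stab Hw.
apply: leq_trans (geq_minl m n); rewrite leqNgt; apply/negP => Hf.
have := before_find 0 Hf; rewrite nth_iota ?add0n ?Hm //.
by rewrite ltnS geq_minr.
Qed.

Lemma dist_ball z w : reach s z w -> w \in ball s (dist s z w) z.
Proof.
move=> H.
have Hh : has (fun k => w \in ball s k z) (iota 0 n.+1).
  by apply/hasP; exists n; [rewrite mem_iota add0n ltnSn | exact: H].
have := nth_find 0 Hh; rewrite nth_iota ?add0n //.
by move: Hh; rewrite has_find size_iota.
Qed.

Lemma dist_refl z : dist s z z = 0.
Proof. by apply/eqP; rewrite -leqn0; apply: dist_le (ball_refl z). Qed.

Lemma reach_ball m z w : w \in ball s m z -> reach s z w.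
Proof. exact: ball_stab. Qed.

End Ball.

Lemma ball_subrel n (s s' : profile n) : (forall p q, adj s' p q -> adj s p q) ->
  forall m z w, w \in ball s' m z -> w \in ball s m z.
Proof.
move=> Hs; elim=> [|m IH] z w; first by rewrite !ball0.
case/ballSP => [H|[v H1 H2]]; first by apply: ball_sub1; apply: IH.
by apply: ball_step (IH _ _ H1) (Hs _ _ H2).
Qed.

Lemma detour n (s s' : profile n) D z w :
  w \in ball s D z -> w \notin ball s' D z ->
  exists P Q dP dQ, [/\ adj s P Q, ~~ adj s' P Q, P \in ball s dP z,
                        w \in ball s' dQ Q & dP + 1 + dQ <= D].
Proof.
elim: D w => [|D IH] w; first by rewrite !ball0 => ->.
case/ballSP => [Hw Hn|[v Hv Hvw] Hn].
  have Hn2 : w \notin ball s' D z by apply/negP => /ball_sub1; apply/negP.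
  have [P [Q [dP [dQ [H1 H2 H3 H4 H5]]]]] := IH w Hw Hn2.
  by exists P, Q, dP, dQ; split => //; apply: leqW.
case Ha: (adj s' v w).
  have Hvn : v \notin ball s' D z by apply/negP => /ball_step /(_ Ha); apply/negP.
  have [P [Q [dP [dQ [H1 H2 H3 H4 H5]]]]] := IH v Hv Hvn.
  exists P, Q, dP, dQ.+1; split => //; first by apply: ball_step H4 Ha.
  by rewrite addnS.
by exists v, w, D, 0; rewrite Ha Hvw Hv ball_refl addn0 addn1.
Qed.


Section Key.
Variables (n : nat) (s s0 s1 s2 s3 : profile n) (u a b x y : 'I_n) (J : nat).
Hypothesis conn : forall z w, reach s z w.
Hypothesis sub0 : forall p q, adj s0 p q -> adj s p q.
Hypothesis sub01 : forall p q, adj s0 p q -> adj s1 p q.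
Hypothesis sub3 : forall p q, adj s3 p q -> adj s p q.
Hypothesis sub32 : forall p q, adj s3 p q -> adj s2 p q.
Hypothesis e1 : adj s1 u x.
Hypothesis e2 : adj s2 x u.
Hypothesis ea : adj s u a.
Hypothesis eb : adj s u b.
Hypothesis exy : adj s x y.
Hypothesis bad0 : forall P Q, adj s P Q -> ~~ adj s0 P Q ->
  (P = u /\ (Q = a \/ Q = b)) \/ (Q = u /\ (P = a \/ P = b)).
Hypothesis bad3 : forall P Q, adj s P Q -> ~~ adj s3 P Q ->
  (P = x /\ Q = y) \/ (P = y /\ Q = x).
Hypothesis HJ1 : 0 < J.
Hypothesis HJux : forall m, x \in ball s m u -> J <= m.
Hypothesis arca : a \in ball s0 J.+1 x.
Hypothesis arcb : b \in ball s0 J.+1 x.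
Hypothesis arcy : y \in ball s3 J.+1 u.

Ltac LK := intros; repeat match goal with H : is_true (_ <= _) |- _ => revert H end; clear; intros; lia.

Lemma HJxu m : u \in ball s m x -> J <= m.
Proof. by move/ball_sym; apply: HJux. Qed.

Lemma key v : exists L1 L2, [/\ v \in ball s1 L1 u, v \in ball s2 L2 x &
   L1 + L2 <= dist s u v + dist s x v + 2].
Proof.
set p := dist s u v; set q := dist s x v.
have Hp : v \in ball s p u := dist_ball (conn u v).
have Hq : v \in ball s q x := dist_ball (conn x v).
have minp m : v \in ball s m u -> p <= m by apply: dist_le.
have minq m : v \in ball s m x -> q <= m by apply: dist_le.
clearbody p q.
have l0 := ball_subrel sub0.
have l3 := ball_subrel sub3.
have l01 := ball_subrel sub01.
have l32 := ball_subrel sub32.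
have ea' : adj s a u by rewrite adjC.
have eb' : adj s b u by rewrite adjC.
have eyx : adj s y x by rewrite adjC.
have QX : v \notin ball s0 q x -> J + p <= q.
  move=> Hn; have [P [Q [dP [dQ [H1 H2 H3 H4 H5]]]]] := detour Hq Hn.
  case: (bad0 H1 H2) => [[EP [EQ|EQ]]|[EQ [EP|EP]]]; subst P Q.
  - have := HJxu H3. have := minp _ (ball_trans (ball_adj ea) (l0 _ _ _ H4)). LK.
  - have := HJxu H3; have := minp _ (ball_trans (ball_adj eb) (l0 _ _ _ H4)); LK.
  - have := HJxu (ball_step H3 ea'); have := minp _ (l0 _ _ _ H4); LK.
  - have := HJxu (ball_step H3 eb'); have := minp _ (l0 _ _ _ H4); LK.
have PU : v \notin ball s3 p u -> J + q <= p.
  move=> Hn; have [P [Q [dP [dQ [H1 H2 H3 H4 H5]]]]] := detour Hp Hn.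
  case: (bad3 H1 H2) => [[EP EQ]|[EP EQ]]; subst P Q.
  - have := HJux H3; have := minq _ (ball_trans (ball_adj exy) (l3 _ _ _ H4)); LK.
  - have := HJux (ball_step H3 eyx); have := minq _ (l3 _ _ _ H4); LK.
have ux m w : w \in ball s0 m x -> w \in ball s1 m.+1 u.
  move=> H; have := ball_trans (ball_adj e1) (l01 _ _ _ H); by rewrite add1n.
have xu m w : w \in ball s3 m u -> w \in ball s2 m.+1 x.
  move=> H; have := ball_trans (ball_adj e2) (l32 _ _ _ H); by rewrite add1n.
case X0 : (v \in ball s0 q x); case U3 : (v \in ball s3 p u).
- exists q.+1, p.+1; split; [exact: ux | exact: xu | LK].
- have := PU (negbT U3) => Hpq.
  case V3 : (v \in ball s3 q x).
    by exists q.+1, q; split; [exact: ux | exact: l32 _ _ _ | LK].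
  have [P [Q [dP [dQ [H1 H2 H3 H4 H5]]]]] := detour Hq (negbT V3).
  case: (bad3 H1 H2) => [[EP EQ]|[EP EQ]]; subst P Q.
    exists q.+1, (J.+2 + dQ); split; [exact: ux| |LK].
    by have := xu _ _ (ball_trans arcy H4); rewrite addSn.
  by have := minq _ (l3 _ _ _ H4); LK.
- have := QX (negbT X0) => Hpq.
  case V0 : (v \in ball s0 p u).
    by exists p, p.+1; split; [exact: l01 _ _ _ | exact: xu | LK].
  have [P [Q [dP [dQ [H1 H2 H3 H4 H5]]]]] := detour Hp (negbT V0).
  case: (bad0 H1 H2) => [[EP [EQ|EQ]]|[EQ [EP|EP]]]; subst P Q.
  + exists (J.+2 + dQ), p.+1; split; [|exact: xu|LK].
    by have := ux _ _ (ball_trans arca H4); rewrite addSn.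
  + exists (J.+2 + dQ), p.+1; split; [|exact: xu|LK].
    by have := ux _ _ (ball_trans arcb H4); rewrite addSn.
  + by have := minp _ (l0 _ _ _ H4); LK.
  + by have := minp _ (l0 _ _ _ H4); LK.
- have := QX (negbT X0); have := PU (negbT U3); LK.
Qed.

End Key.


Lemma adj_dev n (s : profile n) z (S : {set 'I_n}) P Q : P != z -> Q != z ->
  adj (deviate s z S) P Q = adj s P Q.
Proof. by move=> HP HQ; rewrite /adj /deviate (negbTE HP) (negbTE HQ). Qed.

Lemma adj_dev_mono n (s : profile n) z (S S' : {set 'I_n}) (P Q : 'I_n) :
  S \subset S' -> adj (deviate s z S) P Q -> adj (deviate s z S') P Q.
Proof.
move=> /subsetP H; rewrite /adj /deviate.
by case: (P == z); case: (Q == z) => /= /orP [] H'; apply/orP;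
  by [left; apply: H | right; apply: H | left | right].
Qed.

Lemma adj_dev_sub n (s : profile n) z (S : {set 'I_n}) (P Q : 'I_n) :
  S \subset s z -> adj (deviate s z S) P Q -> adj s P Q.
Proof.
move=> H /(adj_dev_mono H); rewrite /adj /deviate.
by case: eqP => [->|_]; case: eqP => [->|_].
Qed.

Lemma bad_dev n (s : profile n) z (S : {set 'I_n}) (P Q : 'I_n) : valid_profile s ->
  adj s P Q -> ~~ adj (deviate s z S) P Q ->
  (P = z /\ Q \in s z :\: S) \/ (Q = z /\ P \in s z :\: S).
Proof.
move=> Hv; rewrite /adj /deviate.
case: (eqVneq P z) => [->|HP]; case: (eqVneq Q z) => [->|HQ] //=.
- by rewrite orbb (negbTE (Hv z)).
- case/orP => H1; rewrite negb_or => /andP [H2 H3]; first by left; rewrite inE H1 H2.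
  by rewrite H1 in H3.
- case/orP => H1; rewrite negb_or => /andP [H2 H3]; first by rewrite H1 in H2.
  by right; rewrite inE H1 H3.
- by move=> ->.
Qed.

Lemma nash_conn (R : realFieldType) n (alpha : R) (s : profile n) :
  nash alpha s -> forall z w, reach s z w.
Proof.
move=> [Hv Hn] z w.
have := Hn z [set v | v != z]; rewrite inE eqxx => /(_ isT).
rewrite /cost; case: ifP => [/forallP H _|_]; first exact: H.
case: ifP => // /negP []; apply/forallP => v.
case: (eqVneq v z) => [->|Hvz]; first exact: (ball_stab (ball_refl _ _)).
apply: (@ball_stab _ _ 1); apply: ball_adj; by rewrite /adj /deviate eqxx inE Hvz.
Qed.

Lemma nash_ineq (R : realFieldType) n (alpha : R) (s : profile n) z (S : {set 'I_n}) :
  nash alpha s -> z \notin S -> (forall w, reach (deviate s z S) z w) ->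
  (alpha * (#|s z|)%:R + (\sum_(v | v != z) dist s z v)%:R <=
   alpha * (#|S|)%:R + (\sum_(v | v != z) dist (deviate s z S) z v)%:R)%R.
Proof.
move=> Hn HS Hr; have Hc := nash_conn Hn.
have := (proj2 Hn) z S HS; rewrite /cost.
have -> : [forall v, reach s z v] by apply/forallP.
have -> : [forall v, reach (deviate s z S) z v] by apply/forallP.
by rewrite /= /deviate eqxx.
Qed.

Lemma sum_neq n (g : 'I_n -> nat) z : g z = 0 ->
  \sum_(v | v != z) g v = \sum_v g v.
Proof. by move=> H; rewrite [RHS](bigD1 z) //= H add0n. Qed.

Lemma inD2 (T : finType) (A : {set T}) c d w : w \in A :\: (A :\ c :\ d) -> w = c \/ w = d.
Proof.
rewrite !inE => /andP [H1 H2]; move: H1; rewrite H2 andbT negb_and !negbK.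
by case/orP => /eqP; [right|left].
Qed.

Lemma inD1 (T : finType) (A : {set T}) c w : w \in A :\: (A :\ c) -> w = c.
Proof. by rewrite !inE => /andP [H1 H2]; move: H1; rewrite H2 andbT negbK => /eqP. Qed.

Lemma fin_arith (R : realFieldType) (alpha t1 t2 t3 t4 du dx d1 d2 nn : R) :
  (4 * nn < alpha -> 0 <= nn -> t2 + du <= t1 + d1 -> t4 + dx <= t3 + d2 ->
  t1 + alpha <= t2 -> t3 <= t4 -> d1 + d2 <= du + dx + nn + nn -> False)%R.
Proof. move=> *; lra. Qed.

Section Contra.
Variables (R : realFieldType) (n : nat) (alpha : R) (s : profile n).
Variables (u a b x y : 'I_n).
Hypothesis Halpha : (4 * n%:R < alpha)%R.
Hypothesis Hnash : nash alpha s.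
Hypothesis Ha : a \in s u.
Hypothesis Hb : b \in s u.
Hypothesis Hab : a != b.
Hypothesis Hy : y \in s x.
Hypothesis Hxu : x != u.
Let s0 := deviate s u (s u :\ a :\ b).
Let s3 := deviate s x (s x :\ y).
Let J := dist s u x.
Hypothesis arca : a \in ball s0 J.+1 x.
Hypothesis arcb : b \in ball s0 J.+1 x.
Hypothesis arcy : y \in ball s3 J.+1 u.

Lemma nash_contra : False.
Proof.
have Hv := proj1 Hnash.
have conn := nash_conn Hnash.
pose S1 := x |: (s u :\ a :\ b); pose S2 := u |: (s x :\ y).
pose s1 := deviate s u S1; pose s2 := deviate s x S2.
have sub0 p q : adj s0 p q -> adj s p q.
  by apply: adj_dev_sub; apply/subsetP => w; rewrite !inE => /andP [_ /andP [_ ->]].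
have sub01 p q : adj s0 p q -> adj s1 p q.
  by apply: adj_dev_mono; apply/subsetP => w; rewrite !inE => ->; rewrite orbT.
have sub3 p q : adj s3 p q -> adj s p q.
  by apply: adj_dev_sub; apply/subsetP => w; rewrite !inE => /andP [_ ->].
have sub32 p q : adj s3 p q -> adj s2 p q.
  by apply: adj_dev_mono; apply/subsetP => w; rewrite !inE => ->; rewrite orbT.
have e1 : adj s1 u x by rewrite /adj /s1 /deviate eqxx !inE eqxx.
have e2 : adj s2 x u by rewrite /adj /s2 /deviate eqxx !inE eqxx.
have ea : adj s u a by rewrite /adj Ha.
have eb : adj s u b by rewrite /adj Hb.
have exy : adj s x y by rewrite /adj Hy.
have bad0 P Q : adj s P Q -> ~~ adj s0 P Q ->
    (P = u /\ (Q = a \/ Q = b)) \/ (Q = u /\ (P = a \/ P = b)).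
  move=> H1 H2; case: (bad_dev Hv H1 H2) => [[-> /inD2 H]|[-> /inD2 H]]; by [left|right].
have bad3 P Q : adj s P Q -> ~~ adj s3 P Q -> (P = x /\ Q = y) \/ (P = y /\ Q = x).
  move=> H1 H2; case: (bad_dev Hv H1 H2) => [[-> /inD1 H]|[-> /inD1 H]]; by [left|right].
have HJ1 : 0 < J.
  rewrite lt0n; apply/negP => /eqP HJ; have := dist_ball (conn u x).
  by rewrite -/J HJ ball0 (negbTE Hxu).
have HJux m : x \in ball s m u -> J <= m by apply: dist_le.
have K := key conn sub0 sub01 sub3 sub32 e1 e2 ea eb exy bad0 bad3 HJ1 HJux arca arcb arcy.
have r1 w : reach s1 u w by have [L1 [L2 [H1 _ _]]] := K w; apply: ball_stab H1.
have r2 w : reach s2 x w by have [L1 [L2 [_ H2 _]]] := K w; apply: ball_stab H2.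
have nu : u \notin S1 by rewrite !inE eq_sym (negbTE Hxu) (negbTE (Hv u)) !andbF.
have nx : x \notin S2 by rewrite !inE (negbTE Hxu) (negbTE (Hv x)) !andbF.
have N1 := nash_ineq Hnash nu r1.
have N2 := nash_ineq Hnash nx r2.
have C1 : (#|S1| + 1 <= #|s u|)%N.
  rewrite (cardsD1 a (s u)) Ha (cardsD1 b (s u :\ a)) !inE eq_sym Hab Hb /= cardsU1.
  have := leq_b1 (x \notin s u :\ a :\ b); move: (x \notin _) => bb; move: (#|_|) => cc; clear; lia.
have C2 : (#|S2| <= #|s x|)%N.
  rewrite (cardsD1 y (s x)) Hy cardsU1 add1n.
  have := leq_b1 (u \notin s x :\ y); move: (u \notin _) => bb; move: (#|_|) => cc; clear; lia.
have D : (\sum_(v | v != u) dist s1 u v + \sum_(v | v != x) dist s2 x v <=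
          \sum_(v | v != u) dist s u v + \sum_(v | v != x) dist s x v + n.*2)%N.
  rewrite !sum_neq ?dist_refl // -!big_split /= -mul2n mulnC -[X in (_ + X * _)%N]card_ord.
  rewrite -sum_nat_const -big_split /=; apply: leq_sum => v _.
  have [L1 [L2 [H1 H2 H3]]] := K v.
  by apply: leq_trans H3; apply: leq_add; apply: dist_le.
move: N1 N2 C1 C2 D.
rewrite -/s1 -/s2.
move: (\sum_(v | v != u) dist s1 u v) (\sum_(v | v != x) dist s2 x v) => d1 d2.
move: (\sum_(v | v != u) dist s u v) (\sum_(v | v != x) dist s x v) => du dx.
move: #|S1| #|s u| #|S2| #|s x| => A1 Au A2 Ax.
move=> N1 N2 C1 C2 D.
have apos : (0 < alpha)%R.
  by apply: le_lt_trans Halpha; rewrite mulr_ge0 // ler0n.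
have C1' : (A1%:R + 1 <= Au%:R :> R)%R by rewrite -[1%R]/(1%:R)%R -natrD ler_nat.
have C2' : (A2%:R <= Ax%:R :> R)%R by rewrite ler_nat.
have C1'' := ler_wpM2l (ltW apos) C1'; rewrite mulrDr mulr1 in C1''.
have C2'' := ler_wpM2l (ltW apos) C2'.
have D' : (d1%:R + d2%:R <= du%:R + dx%:R + n%:R + n%:R :> R)%R.
  by rewrite -!natrD ler_nat -addnA addnn.
have n0 : (0 <= n%:R :> R)%R by rewrite ler0n.
have H4 : (4 * n%:R = n%:R + n%:R + n%:R + n%:R :> R)%R by ring.
move: N1 N2 C1'' C2''.
move: (alpha * A1%:R)%R (alpha * Au%:R)%R (alpha * A2%:R)%R (alpha * Ax%:R)%R => t1 t2 t3 t4.
move=> N1 N2 C1'' C2''.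
have N1' : (t2 + du%:R <= t1 + d1%:R :> R)%R := N1.
have N2' : (t4 + dx%:R <= t3 + d2%:R :> R)%R := N2.
exact: (fin_arith Halpha n0 N1' N2' C1'' C2'' D').
Qed.
End Contra.


Ltac L := intros; repeat match goal with H : is_true (_ <= _)%N |- _ => revert H | H : _ = _ :> nat |- _ => revert H | H : _ \/ _ |- _ => revert H end; clear; intros; lia.

Lemma arc n (s' : profile n) (g : nat -> 'I_n) lo d :
  (forall t, lo <= t -> t < lo + d -> adj s' (g t) (g t.+1)) ->
  g (lo + d) \in ball s' d (g lo).
Proof.
elim: d => [|d IH] H; first by rewrite addn0 ball_refl.
rewrite addnS; apply: ball_step; first by apply: IH => t H1 H2; apply: H => //; lia.
by apply: H; lia.
Qed.

Lemma cyc_shift k i j : i < k -> 0 < j < k -> cyc_dist k i ((i + j) %% k) = minn j (k - j).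
Proof.
move=> Hi /andP [Hj1 Hj2]; rewrite /cyc_dist.
case: (ltnP (i + j) k) => H.
  rewrite modn_small //; case: ifP => Hc; lia.
have -> : (i + j) %% k = i + j - k.
  by rewrite -{1}(subnK H) modnDr modn_small //; lia.
case: ifP => Hc; lia.
Qed.

Lemma prop2_aux (R : realFieldType) (n : nat) (alpha : R) (s : profile n)
    (V : {set 'I_n}) (E : {set 'I_n * 'I_n}) (c : seq 'I_n) :
  (4 * n%:R < alpha)%R ->
  nash alpha s ->
  two_ec_component s V E -> 3 <= #|V| ->
  cycle_in c V E -> minimal_cycle s c ->
  directed_cycle s c.
Proof.
move=> Halpha Hnash [[[HEsub _] _] _] _ [Hk Huniq _ Hedge] Hmin.
have Hv := proj1 Hnash.
set k := size c in Hk Hedge Hmin *.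
have kpos : (0 < k)%N by apply: leq_trans Hk.
pose x0 := cv c (Ordinal kpos).
pose f m := nth x0 c (m %% k).
have cvE (i : 'I_k) : cv c i = f i by rewrite /cv (tnth_nth x0) /f modn_small.
have fD m t : f (m %% k + t) = f (m + t) by rewrite /f modnDml.
have fmod m : f (m %% k) = f m by rewrite -[m %% k]addn0 fD addn0.
have cvS (i : 'I_k) : cv c (ordS i) = f i.+1 by rewrite cvE /= fmod.
have fedge m : adj s (f m) (f m.+1).
  have := Hedge (Ordinal (ltn_pmod m kpos)); rewrite cvS cvE /= fmod -addn1 fD addn1.
  by move/(subsetP HEsub); rewrite inE.
have finj m m' : f m = f m' -> m %% k = m' %% k.
  by move=> /eqP; rewrite /f nth_uniq ?ltn_pmod // => /eqP.
have fdist m m' : dist s (f m) (f m') = cyc_dist k (m %% k) (m' %% k).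
  by have := Hmin (Ordinal (ltn_pmod m kpos)) (Ordinal (ltn_pmod m' kpos)); rewrite !cvE /= !fmod.
case D1 : [forall i : 'I_k, f i.+1 \in s (f i)].
  by left => i; rewrite cvS cvE; apply: (forallP D1 i).
case D2 : [forall i : 'I_k, f i \in s (f i.+1)].
  by right => i; rewrite cvS cvE; apply: (forallP D2 i).
exfalso.
move/negbT/forallPn: D1 => [i0 Hi0]; move/negbT/forallPn: D2 => [i1 Hi1].
pose F m := f m.+1 \in s (f m).
have Fper m t : F (m %% k + t) = F (m + t) by rewrite /F -!addnS !fD.
have F0 m : F (m %% k) = F m by have := Fper m 0; rewrite !addn0.
have F1 m : F (m %% k).+1 = F m.+1 by have := Fper m 1; rewrite !addn1.
have [m /andP [Fm FSm]] : exists m, ~~ F m && F m.+1.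
  case E0: [exists i : 'I_k, ~~ F i && F i.+1]; first by move/existsP: E0 => [i H]; exists i.
  have step m : ~~ F m -> ~~ F m.+1.
    move=> H; move/negbT/existsPn: E0 => /(_ (Ordinal (ltn_pmod m kpos))) /=.
    by rewrite F0 F1 H.
  have all t : ~~ F (i0 + t).
    elim: t => [|t IH]; first by rewrite addn0.
    by rewrite addnS; apply: step.
  have := all (i1 + i0 * k - i0).
  have -> : (i0 + (i1 + i0 * k - i0) = i0 * k + i1)%N.
    have := leq_pmulr i0 kpos; lia.
  have := F0 (i0 * k + i1); rewrite modnMDl modn_small // => <-.
  have := fedge i1; rewrite /adj (negbTE Hi1) orbF => H.
  by rewrite /F H.
have Bm : f m \in s (f m.+1).
  by have := fedge m; move: Fm; rewrite /F /adj => /negbTE ->.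
pose r t := f (m.+1 + t).
have redge t : adj s (r t) (r t.+1) by rewrite /r addnS; apply: fedge.
have rinj t t' : r t = r t' -> t %% k = t' %% k.
  by move=> /finj /eqP; rewrite eqn_modDl => /eqP.
have rne t t' : (t <= k)%N -> (t' < k)%N -> t != t' -> (t == k -> t' != 0)%N -> r t != r t'.
  move=> H1 H2 H3 H4; apply/negP => /eqP /rinj.
  case: (eqVneq t k) => [Et|Nt].
    by rewrite Et modnn modn_small // => E'; move: (H4 (introT eqP Et)); rewrite -E' eqxx.
  rewrite !modn_small //; last by rewrite ltn_neqAle Nt H1.
  by move=> E'; move: H3; rewrite E' eqxx.
have rne0 t : (0 < t < k)%N -> r t != r 0.
  move=> /andP [H1 H2]; apply: rne => //; [exact: ltnW | by rewrite -lt0n | by rewrite (ltn_eqF H2)].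
have Ha : r 1 \in s (r 0) by rewrite /r addn0 addn1; exact: FSm.
have Hb : r k.-1 \in s (r 0).
  by rewrite /r addn0 addSnnS prednK // -fmod modnDr fmod.
have rdist j : (0 < j < k)%N -> dist s (r 0) (r j) = minn j (k - j).
  move=> Hj; rewrite fdist addn0 -modnDml; apply: cyc_shift => //; exact: ltn_pmod.
pose j0 := k./2.
have hk2 : k = (j0 + j0)%N \/ k = (j0 + j0).+1.
  have := odd_double_half k; rewrite -/j0 -addnn; case: (odd k) => <-; [right|left] => //.
have hj0 : (1 <= j0)%N by case: hk2 Hk; lia.
have hj1 : (j0.+2 <= k)%N by move: hk2 Hk hj0; L.
have rk : r k = r 0 by rewrite /r addn0 -fmod modnDr fmod.
have rne0' t : (0 < t)%N -> (t < k)%N -> r t != r 0.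
  by move=> H1 H2; apply: rne0; rewrite H1 H2.
have Hab : r 1 != r k.-1.
  rewrite eq_sym; apply: rne; [exact: leq_pred | by move: hj1; L | by move: hj1; L | by move=> /eqP; move: hj1; L].
have ed0 S t : (0 < t)%N -> (t.+1 < k)%N -> adj (deviate s (r 0) S) (r t) (r t.+1).
  move=> H1 H2; rewrite adj_dev ?redge //; apply: rne0' => //; move: H1 H2; L.
have ed3 S j t : (0 < j < k)%N -> (t <= k)%N -> (t.+1 <= k)%N -> t != j -> t.+1 != j ->
    adj (deviate s (r j) S) (r t) (r t.+1).
  move=> /andP [H1 H2] H3 H4 H5 H6; rewrite adj_dev ?redge //; apply: rne => //;
  move=> /eqP Ht; move: H1; L.
have := redge j0; rewrite /adj => /orP [Hy|Hy].
- (* x = r j0, y = r j0.+1 *)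
  have HJ : dist s (r 0) (r j0) = j0.
    rewrite rdist; [move: hk2; L | apply/andP; split; move: hj0 hj1; L].
  apply: (nash_contra Halpha Hnash Ha Hb Hab Hy); rewrite ?HJ.
  + by apply: rne0'; move: hj0 hj1; L.
  + apply: (@ball_mono _ _ (j0 - 1)); first by L.
    apply: ball_sym; have := @arc _ (deviate s (r 0) (s (r 0) :\ r 1 :\ r k.-1)) r 1 (j0 - 1).
    rewrite (_ : (1 + (j0 - 1) = j0)%N); last by move: hj0; L.
    by apply=> t H1 H2; apply: ed0; move: H1 H2 hj0 hj1; L.
  + apply: (@ball_mono _ _ (k.-1 - j0)); first by move: hk2; L.
    have := @arc _ (deviate s (r 0) (s (r 0) :\ r 1 :\ r k.-1)) r j0 (k.-1 - j0).
    rewrite (_ : (j0 + (k.-1 - j0) = k.-1)%N); last by move: hj1; L.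
    by apply=> t H1 H2; apply: ed0; move: H1 H2 hj0 hj1; L.
  + apply: (@ball_mono _ _ (k - j0.+1)); first by move: hk2; L.
    apply: ball_sym; have := @arc _ (deviate s (r j0) (s (r j0) :\ r j0.+1)) r j0.+1 (k - j0.+1).
    rewrite (_ : (j0.+1 + (k - j0.+1) = k)%N) ?rk; last by move: hj1; L.
    by apply=> t H1 H2; apply: ed3; try (apply/andP; split); L.
- (* x = r j0.+1, y = r j0 *)
  have HJ : dist s (r 0) (r j0.+1) = (k - j0.+1)%N.
    rewrite rdist; [move: hk2; L | apply/andP; split; move: hj0 hj1; L].
  apply: (nash_contra Halpha Hnash Ha Hb Hab Hy); rewrite ?HJ.
  + by apply: rne0'; move: hj0 hj1; L.
  + apply: (@ball_mono _ _ j0); first by move: hk2; L.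
    apply: ball_sym; have := @arc _ (deviate s (r 0) (s (r 0) :\ r 1 :\ r k.-1)) r 1 j0.
    rewrite add1n.
    by apply=> t H1 H2; apply: ed0; move: H1 H2 hj0 hj1; L.
  + apply: (@ball_mono _ _ (k.-1 - j0.+1)); first by move: hk2; L.
    have := @arc _ (deviate s (r 0) (s (r 0) :\ r 1 :\ r k.-1)) r j0.+1 (k.-1 - j0.+1).
    rewrite (_ : (j0.+1 + (k.-1 - j0.+1) = k.-1)%N); last by move: hj1; L.
    by apply=> t H1 H2; apply: ed0; move: H1 H2 hj0 hj1; L.
  + apply: (@ball_mono _ _ j0); first by move: hk2; L.
    have := @arc _ (deviate s (r j0.+1) (s (r j0.+1) :\ r j0)) r 0 j0.
    rewrite add0n.
    by apply=> t H1 H2; apply: ed3; try (apply/andP; split); L.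
Qed.

Local Open Scope ring_scope.

Theorem proposition2 (R : realFieldType) (n : nat) (alpha : R) (s : profile n)
    (V : {set 'I_n}) (E : {set 'I_n * 'I_n}) (c : seq 'I_n) :
  4 * n%:R < alpha ->
  nash alpha s ->
  two_ec_component s V E -> (3 <= #|V|)%N ->
  cycle_in c V E -> minimal_cycle s c ->
  directed_cycle s c.
Proof. exact: prop2_aux. Qed.
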